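(* Consider a football league with $n\ge 2$ teams in which every pair of distinct teams $i\neq j$ plays twice, once at the home ground of each team. For $i\neq j$ and $k\in\{0,1\}$, let $X_{ij1}$ be the number of goals scored by team $i$ against team $j$ in the match at $i$'s home ground and $X_{ij0}$ the number of goals scored by team $i$ against team $j$ in the match at $j$'s home ground. Suppose the $X_{ijk}$ are independent and all follow a Poisson distribution with the same mean $\lambda>0$. Then there exists a value $\lambda_0>0$ such that, when $\lambda=\lambda_0$, every match is equally likely to end in a win, a draw or a loss for any team, i.e. for each match the probabilities that the home team scores more, equally many, or fewer goals than the away team are all equal to $1/3$.
   Context: A match between team $i$ (at home) and team $j$ is a win for $i$ if $X_{ij1}>X_{ji0}$, a draw if $X_{ij1}=X_{ji0}$, and a loss for $i$ if $X_{ij1}<X_{ji0}$. *)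

(* Defs.v *)
From HB Require Import structures.
From mathcomp Require Import all_boot all_order all_algebra.
From mathcomp Require Import all_classical all_reals all_analysis.
Set Implicit Arguments. Unset Strict Implicit. Unset Printing Implicit Defensive.
Import Order.TTheory GRing.Theory Num.Theory.
Local Open Scope classical_set_scope.
Local Open Scope ring_scope.

(* Index (i, j, k) of the goal count X_{ijk}: goals scored by team i against
   team j, in the match at i's home ground (k = true, i.e. k = 1) or at j's
   home ground (k = false, i.e. k = 0).  Only i <> j is meaningful. *)
Definition goal_index (n : nat) := ('I_n * 'I_n * bool)%type.

Definition valid_index (n : nat) (v : goal_index n) : bool := v.1.1 != v.1.2.

Definition goals_measurable (d : measure_display) (T : measurableType d)
  (n : nat) (X : goal_index n -> T -> nat) : Prop :=
  forall v k, valid_index v -> measurable (X v @^-1` [set k]).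

(* Mutual independence of the family (X_v)_{v valid}: product rule over every
   finite subfamily of level-set events (for nat-valued random variables this
   is the usual definition of independence). *)
Definition goals_independent (R : realType) (d : measure_display)
  (T : measurableType d) (P : probability T R) (n : nat)
  (X : goal_index n -> T -> nat) : Prop :=
  forall (S : {set goal_index n}) (a : goal_index n -> nat),
    (forall v, v \in S -> valid_index v) ->
    P (\bigcap_(v in [set` S]) (X v @^-1` [set a v])) =
    (\prod_(v in S) P (X v @^-1` [set a v]))%E.

Definition goals_poisson (R : realType) (d : measure_display)
  (T : measurableType d) (P : probability T R) (n : nat)
  (X : goal_index n -> T -> nat) (lam : R) : Prop :=
  forall v k, valid_index v -> P (X v @^-1` [set k]) = (poisson_pmf lam k)%:E.

(* Main.v *)
Require Import Defs.
From HB Require Import structures.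
From mathcomp Require Import all_boot all_order all_algebra.
From mathcomp Require Import all_classical all_reals all_analysis.
From mathcomp Require Import ring lra zify.
Import Order.TTheory GRing.Theory Num.Theory.
Import numFieldNormedType.Exports.
Local Open Scope classical_set_scope.
Local Open Scope ring_scope.

Section Analytic.
Variable R : realType.

Definition coefH (k : nat) : R := ((k`! ^ 2)%:R)^-1.
Definition Hf (y : R) : R := limn (pseries coefH y).
Definition gf (l : R) : R := expR (- l) ^+ 2 * Hf (l ^+ 2).

Lemma le_fracfact (m n k : nat) : (0 < n)%N -> (m * k`! <= n)%N ->
  m%:R / n%:R <= (k`!%:R)^-1 :> R.
Proof.
move=> n0 h; rewrite ler_pdivrMr ?ltr0n // mulrC ler_pdivlMr ?ltr0n ?fact_gt0 //.
by rewrite -natrM ler_nat.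
Qed.

Lemma cvg_dom (c : nat -> R) K : 0 <= K -> (forall k, 0 <= c k) ->
  (forall k, c k <= (k`!%:R)^-1) -> cvgn (pseries c K).
Proof.
move=> K0 c0 cle; apply: (@series_le_cvg _ _ (exp_coeff K)).
- by move=> k; rewrite mulr_ge0 // exprn_ge0.
- by move=> k; rewrite /exp_coeff /= mulr_ge0 ?exprn_ge0 // invr_ge0.
- move=> k; rewrite /exp_coeff /= mulrC ler_wpM2l ?exprn_ge0 //.
- exact: is_cvg_series_exp_coeff.
Qed.

Lemma coefH_ge0 k : 0 <= coefH k.
Proof. by rewrite /coefH invr_ge0. Qed.

Lemma c0_bound k : coefH k <= (k`!%:R)^-1.
Proof.
rewrite /coefH -[_^-1]mul1r; apply: (@le_fracfact 1); first by rewrite expn_gt0 fact_gt0.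
by rewrite mul1n expnS expn1 leq_pmulr // fact_gt0.
Qed.

Lemma c1_bound k : pseries_diffs coefH k <= (k`!%:R)^-1.
Proof.
rewrite /pseries_diffs /coefH; apply: le_fracfact; first by rewrite expn_gt0 fact_gt0.
rewrite expnS expn1 factS; nia.
Qed.

Lemma c1_ge0 k : 0 <= pseries_diffs coefH k.
Proof. by rewrite /pseries_diffs mulr_ge0 ?coefH_ge0. Qed.

Lemma c2_bound k : pseries_diffs (pseries_diffs coefH) k <= (k`!%:R)^-1.
Proof.
rewrite /pseries_diffs /coefH mulrA -natrM; apply: le_fracfact; first by rewrite expn_gt0 fact_gt0.
rewrite expnS expn1 !factS; nia.
Qed.

Lemma c2_ge0 k : 0 <= pseries_diffs (pseries_diffs coefH) k.
Proof. by rewrite /pseries_diffs mulr_ge0 ?c1_ge0. Qed.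

Lemma Hf_cont : continuous Hf.
Proof.
move=> y.
have K0 : 0 <= `|y| + 1 by rewrite addr_ge0.
have := @pseries_snd_diffs R coefH (`|y| + 1) y
  (cvg_dom _ _ K0 coefH_ge0 c0_bound) (cvg_dom _ _ K0 c1_ge0 c1_bound)
  (cvg_dom _ _ K0 c2_ge0 c2_bound).
rewrite [`|_ + 1|]ger0_norm // ltrDl ltr01 => /(_ isT) hd.
apply/differentiable_continuous/derivable1_diffP.
by case: hd.
Qed.

Lemma gf_cont : continuous gf.
Proof.
move=> l; rewrite /gf.
change {for l, continuous ((fun l => expR (- l) ^+ 2) \* (fun l => Hf (l ^+ 2)))}.
apply: continuousM.
- apply: (@continuous_comp _ _ _ (fun l : R => expR (- l)) (fun x => x ^+ 2)).
    apply: (@continuous_comp _ _ _ (fun l : R => - l) expR).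
      exact: opp_continuous.
    exact: continuous_expR.
  exact: exprn_continuous.
- apply: (@continuous_comp _ _ _ (fun l : R => l ^+ 2) Hf).
    exact: exprn_continuous.
  exact: Hf_cont.
Qed.

Lemma Hf0 : Hf 0 = 1.
Proof.
rewrite /Hf /pseries; apply: lim_near_cst => //.
near=> m; rewrite /series /=.
rewrite -[m]prednK; last by near: m; exists 1%N.
rewrite big_nat_recl // big1 ?addr0.
  by rewrite /coefH expr0 mulr1 fact0 invr1.
by move=> i _; rewrite expr0n mulr0.
Unshelve. all: by end_near. Qed.

Lemma gf0 : gf 0 = 1.
Proof. by rewrite /gf oppr0 expR0 expr1n expr0n Hf0 mulr1. Qed.

Lemma pow2_fact k : (2 ^ k <= 2 * k`!)%N.
Proof.
elim: k => [//|k IH]; rewrite expnS factS.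
case: k IH => [//|k] IH; nia.
Qed.

Lemma Hf4 : Hf 4 <= 2 * expR 2.
Proof.
rewrite /Hf -[2 * expR 2]/(2 *: expR 2) /expR -lim_seriesZ; last exact: is_cvg_series_exp_coeff.
apply: ler_lim.
- apply: cvg_dom _ _ _ coefH_ge0 c0_bound; lra.
- apply: is_cvg_seriesZ; exact: is_cvg_series_exp_coeff.
apply: nearW => n; apply: ler_sum => k _.
rewrite /coefH /exp_coeff /= !fctE.
have -> : (4 : R) ^+ k = (2 ^ k)%:R * (2 ^ k)%:R.
  by rewrite -natrM -expnMn natrX.
have -> : (2 : R) ^+ k = (2 ^ k)%:R by rewrite natrX.
rewrite natrX invfM mulrA.
have hb : (2 ^ k)%:R / k`!%:R <= 2 :> R.
  rewrite ler_pdivrMr ?ltr0n ?fact_gt0 //.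
  by rewrite -natrM ler_nat pow2_fact.
have hb0 : 0 <= (2 ^ k)%:R / k`!%:R :> R by rewrite divr_ge0.
rewrite -[_ *: _]/(2 * ((2 ^ k)%:R / k`!%:R)).
move: hb hb0; set a := k`!%:R; set b := (2 ^ k)%:R => hb hb0.
have -> : a^-1 / a * b * b = (b / a) * (b / a) by rewrite /=; ring.
nra.
Qed.

Lemma exp2_gt6 : 6 < expR 2 :> R.
Proof.
have -> : (2 : R) = 10%:R * (5^-1) by lra.
rewrite expRM_natl.
have h : 1 + 5^-1 <= expR (5^-1 : R) by apply: expR_ge1Dx.
apply: (@lt_le_trans _ _ ((1 + 5^-1) ^+ 10)).
  rewrite !exprS expr0; lra.
apply: lerXn2r => //; rewrite ?nnegrE; lra.
Qed.

Lemma gf2 : gf 2 < 3^-1.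
Proof.
rewrite /gf.
have e2 := exp2_gt6.
have h4 := Hf4.
have -> : (2 : R) ^+ 2 = 4 by rewrite expr2; lra.
have -> : expR (- 2) ^+ 2 = (expR 2 * expR 2)^-1 :> R.
  by rewrite expRN exprVn expr2.
have e0 : 0 < expR 2 :> R by exact: expR_gt0.
rewrite mulrC ltr_pdivrMr ?mulr_gt0 //.
apply: le_lt_trans h4 _; nra.
Qed.

Lemma exists_lam0 : exists2 l : R, 0 < l & gf l = 3^-1.
Proof.
have hc : {within `[0, 2], continuous gf}.
  by apply: continuous_subspaceT; exact: gf_cont.
have hv : Num.min (gf 0) (gf 2) <= 3^-1 <= Num.max (gf 0) (gf 2).
  rewrite gf0; have := gf2; rewrite /Num.min /Num.max; move=> h2; rewrite ge_min le_max; apply/andP; split; apply/orP; [right|left]; lra.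
have [c] := @IVT R gf 0 2 (3^-1) ltac:(lra) hc hv.
rewrite in_itv /= => /andP[c0 c2] gc.
exists c => //; rewrite lt_neqAle c0 andbT; apply/eqP => c00.
by move: gc; rewrite -c00 gf0; lra.
Qed.
End Analytic.
Arguments gf {R}. Arguments coefH {R}. Arguments Hf {R}. Arguments cvg_dom {R}.

Section Prob.
Variables (R : realType) (d : measure_display) (T : measurableType d)
  (P : probability T R) (U V : T -> nat) (p : nat -> R).
Hypothesis mU : forall a, measurable (U @^-1` [set a]).
Hypothesis mV : forall a, measurable (V @^-1` [set a]).
Hypothesis hUV : forall a b,
  P (U @^-1` [set a] `&` V @^-1` [set b]) = (p a * p b)%:E.

Let F (b a : nat) := U @^-1` [set a] `&` V @^-1` [set b].

Lemma lt_eventE : P [set t | (U t < V t)%N] =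
  (\sum_(b <oo) \sum_(a <oo | a \in [set a | (a < b)%N]) (p a * p b)%:E)%E.
Proof.
have E : [set t | (U t < V t)%N] =
    \bigcup_b (\bigcup_(a in [set a | (a < b)%N]) F b a).
  apply/seteqP; split => t /=.
  - by move=> h; exists (V t) => //; exists (U t).
  - by move=> [b _ [a /= ab [/= -> ->]]].
have mF : forall b a, measurable (F b a) by move=> b a; exact: measurableI.
rewrite E measure_semi_bigcup //.
- apply: eq_eseriesr => b _; rewrite measure_bigcup //.
  + by apply: eq_eseriesr => a _; exact: hUV.
  + move=> i j Hi Hj [t [[h1 _] [h2 _]]]; exact: (etrans (esym h1) h2).
- by move=> b; apply: bigcup_measurable => a _; exact: mF.
- move=> i j _ _ [t [[a _ [_ h1]] [a' _ [_ h2]]]]; exact: (etrans (esym h1) h2).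
- by apply: bigcupT_measurable => b; apply: bigcup_measurable => a _; exact: mF.
Qed.

Lemma eq_eventE : P [set t | U t = V t] = (\sum_(b <oo) (p b * p b)%:E)%E.
Proof.
have E : [set t | U t = V t] = \bigcup_b F b b.
  apply/seteqP; split => t /=.
  - by move=> h; exists (V t) => //; rewrite /F /= h.
  - by move=> [b _ [/= -> ->]].
have mF : forall b a, measurable (F b a) by move=> b a; exact: measurableI.
rewrite E measure_semi_bigcup //.
- by apply: eq_eseriesr => b _; exact: hUV.
- move=> i j _ _ [t [[h1 _] [h2 _]]]; exact: (etrans (esym h1) h2).
- by apply: bigcupT_measurable => b; exact: mF.
Qed.
Lemma lt_event_meas : measurable [set t | (U t < V t)%N].
Proof.
have E : [set t | (U t < V t)%N] =
    \bigcup_b (\bigcup_(a in [set a | (a < b)%N]) F b a).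
  apply/seteqP; split => t /=.
  - by move=> h; exists (V t) => //; exists (U t).
  - by move=> [b _ [a /= ab [/= -> ->]]].
rewrite E; apply: bigcupT_measurable => b; apply: bigcup_measurable => a _.
exact: measurableI.
Qed.

Lemma eq_event_meas : measurable [set t | U t = V t].
Proof.
have E : [set t | U t = V t] = \bigcup_b F b b.
  apply/seteqP; split => t /=.
  - by move=> h; exists (V t) => //; rewrite /F /= h.
  - by move=> [b _ [/= -> ->]].
rewrite E; apply: bigcupT_measurable => b; exact: measurableI.
Qed.
End Prob.

Lemma draw_value (R : realType) (l : R) : 0 < l ->
  (\sum_(b <oo) (poisson_pmf l b * poisson_pmf l b)%:E)%E = (gf l)%:E.
Proof.
move=> hl.
have eq : (fun b => poisson_pmf l b * poisson_pmf l b) =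
    (expR (- l) ^+ 2) *: (fun b => coefH b * (l ^+ 2) ^+ b).
  apply/funext => b; rewrite /poisson_pmf hl /coefH !fctE /= natrX -exprVn.
  have -> : (l ^+ 2) ^+ b = (l ^+ b) ^+ 2 by rewrite -!exprM mulnC.
  change (l ^+ b / b`!%:R * expR (- l) * (l ^+ b / b`!%:R * expR (- l)) = expR (- l) ^+ 2 * (b`!%:R^-1 ^+ 2 * l ^+ b ^+ 2) :> R); ring.
have cv : cvgn (series (fun b => coefH b * (l ^+ 2) ^+ b)).
  apply: (cvg_dom _ _ _ (@coefH_ge0 R) (@c0_bound R)).
  by rewrite exprn_ge0 // ltW.
rewrite /gf; change (\sum_(b <oo) (poisson_pmf l b * poisson_pmf l b)%:E = (expR (- l) ^+ 2 *: limn (series (fun b => coefH b * (l ^+ 2) ^+ b)))%:E)%E.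
rewrite -lim_seriesZ // -EFin_lim; last exact: is_cvg_seriesZ.
rewrite -eq; apply: congr_lim; apply/funext => n /=.
by rewrite /series /= sumEFin.
Qed.


Theorem theorem1 (R : realType) :
  exists lam0 : R, 0 < lam0 /\
  forall (n : nat), (2 <= n)%N ->
  forall (d : measure_display) (T : measurableType d) (P : probability T R)
         (X : goal_index n -> T -> nat),
    goals_measurable X ->
    goals_independent P X ->
    goals_poisson P X lam0 ->
    forall i j : 'I_n, i != j ->
      [/\ P [set t | (X (j, i, false) t < X (i, j, true) t)%N] = (3%:R^-1)%:E,
          P [set t | X (i, j, true) t = X (j, i, false) t] = (3%:R^-1)%:E &
          P [set t | (X (i, j, true) t < X (j, i, false) t)%N] = (3%:R^-1)%:E].
Proof.
have [l l0 gl] := exists_lam0 R.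
exists l; split => // n _ d T P X mX indX poiX i j ij.
pose v1 : goal_index n := (i, j, true).
pose v2 : goal_index n := (j, i, false).
have val1 : valid_index v1 by exact: ij.
have val2 : valid_index v2 by rewrite /valid_index /= eq_sym.
have v12 : v1 != v2 by rewrite /v1 /v2 xpair_eqE /= andbF.
pose p := poisson_pmf l.
have hind : forall a b,
    P (X v1 @^-1` [set a] `&` X v2 @^-1` [set b]) = (p a * p b)%:E.
  move=> a b.
  have := indX (finset.setU (finset.set1 v1) (finset.set1 v2)) (fun v => if v == v1 then a else b).
  have -> : \bigcap_(v in [set` (finset.setU (finset.set1 v1) (finset.set1 v2))])
      (X v @^-1` [set (if v == v1 then a else b)]) =
      X v1 @^-1` [set a] `&` X v2 @^-1` [set b].
    apply/seteqP; split => t /=.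
    - move=> h; split.
      + by have := h v1; rewrite /= !inE eqxx /= => /(_ isT).
      + by have := h v2; rewrite /= !inE eqxx orbT eq_sym (negbTE v12) => /(_ isT).
    - move=> [h1 h2] v; rewrite /= !inE => /orP[] /eqP ->.
      + by rewrite eqxx.
      + by rewrite eq_sym (negbTE v12).
  move=> ->; last by move=> v; rewrite !inE => /orP[] /eqP ->.
  rewrite big_setU1 /= ?inE // big_set1 eqxx eq_sym (negbTE v12).
  by rewrite poiX // poiX // EFinM.
have hind' : forall a b,
    P (X v2 @^-1` [set a] `&` X v1 @^-1` [set b]) = (p a * p b)%:E.
  by move=> a b; rewrite setIC hind mulrC.
have m1 : forall a, measurable (X v1 @^-1` [set a]) by move=> a; exact: mX.
have m2 : forall a, measurable (X v2 @^-1` [set a]) by move=> a; exact: mX.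
have W := @lt_eventE R d T P (X v2) (X v1) p m2 m1 hind'.
have L := @lt_eventE R d T P (X v1) (X v2) p m1 m2 hind.
have D := @eq_eventE R d T P (X v1) (X v2) p m1 m2 hind.
rewrite /p draw_value // gl in D.
have mW := @lt_event_meas d T (X v2) (X v1) m2 m1.
have mL := @lt_event_meas d T (X v1) (X v2) m1 m2.
have mD := @eq_event_meas d T (X v1) (X v2) m1 m2.
set S := (\sum_(b <oo) _)%E in W L.
have WL : P [set t | (X v2 t < X v1 t)%N] = P [set t | (X v1 t < X v2 t)%N].
  by rewrite W L.
have tot : (P [set t | (X v2 t < X v1 t)%N] + P [set t | X v1 t = X v2 t]
    + P [set t | (X v1 t < X v2 t)%N] = 1)%E.
  rewrite -(@probability_setT _ _ _ P) -measureU //; last first.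
    apply/seteqP; split => t //= [] [] h1 h2; lia.
  rewrite -measureU //; last by apply/seteqP; split => t //= [] h1 h2; lia.
  congr (P _); apply/seteqP; split => t //= _.
  case: (ltngtP (X v1 t) (X v2 t)); [right|left;left|left;right] => //.
  by apply: measurableU.
have fW : P [set t | (X v2 t < X v1 t)%N] \is a fin_num by exact: fin_num_measure.
rewrite -WL D in tot.
move: tot; rewrite -(fineK fW) -!EFinD => /eqP; rewrite eqe => /eqP tot.
have h3 : fine (P [set t | (X v2 t < X v1 t)%N]) = 3^-1 by lra.
split.
- by rewrite -(fineK fW) h3.
- exact: D.
- by rewrite -WL -(fineK fW) h3.
Qed.
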